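(* Let $q\in(0,1]$. Assume: [A6] for every $j\in\mathcal J^{(0)}$, $(\xi_T^j)^{-1/q}|\alpha_T^j|^{-1}\to0$ in probability as $T\to\infty$; [A7$'$] for some $R>0$: (i) for every $T\in\mathbb T$, $\mathbb H_T$ is almost surely thrice differentiable in $\theta$ on $B=\{\theta\in\Theta:|\theta-\theta^*|<R\}$; (ii) $\|a_T\|\,\partial_\theta\mathbb H_T(\theta^* )=O_p(1)$; (iii) $\|a_T\|^2\sup_{\theta\in B}|\partial_\theta^2\mathbb H_T(\theta)|=O_p(1)$; (iv) $\|a_T\|^2\sup_{\theta\in B}|\partial_\theta^3\mathbb H_T(\theta)|=O_p(1)$, as $T\to\infty$. Then [A7] holds: for every $M>0$, $$\sup_{\substack{u,v\in\mathbb U_T,\ |u|,|v|<M,\ u\neq v}}\frac{|\mathbb H_T(\theta^*+a_Tu)-\mathbb H_T(\theta^*+a_Tv)|}{|u-v|^q}\,\|G_T^{(00)}\|^q\to0$$ in probability as $T\to\infty$.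
   Context: Let $\Theta\subset\mathbb R^{\mathsf p}$ be a bounded open set with closure $\overline\Theta$ and $\theta^*\in\Theta$. Let $(\Omega,\mathcal F,P)$ be a probability space, $\mathbb T\subset\mathbb R_{\ge0}$ with $\sup\mathbb T=\infty$; limits $T\to\infty$ are along $\mathbb T$. For each $T\in\mathbb T$, $\mathbb H_T:\Omega\times\overline\Theta\to\mathbb R$ is a random field continuous in $\theta$ for every $\omega$. $\xi_T^j>0$ ($j=1,\dots,\mathsf p$) are (possibly random) positive quantities (the penalty weights). $\mathcal J^{(0)}=\{j:\theta^*_j=0\}$, $\mathcal J^{(1)}=\{j:\theta^*_j\ne0\}$; for a matrix $A$, $A^{(00)}=(A_{ij})_{i,j\in\mathcal J^{(0)}}$. $a_T=\mathrm{diag}(\alpha_T^1,\dots,\alpha_T^{\mathsf p})$ is a deterministic invertible diagonal matrix with $\|a_T\|\to0$, $\|A\|$ denoting the spectral norm. $\mathbb U_T=\{u:\theta^*+a_Tu\in\overline\Theta\}$. $\tilde a_T$ is the diagonal matrix with $(\tilde a_T)_{jj}=(\xi_T^j)^{-1/q}$ for $j\in\mathcal J^{(0)}$ and $(\tilde a_T)_{jj}=\alpha_T^j$ for $j\in\mathcal J^{(1)}$, and $G_T=a_T^{-1}\tilde a_T$. $\partial_\theta^k\mathbb H_T$ denotes the $k$-th derivative tensor in $\theta$. *)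

(* Defs.v *)
From HB Require Import structures.
From mathcomp Require Import all_boot all_order all_algebra.
From mathcomp Require Import all_classical all_reals all_analysis.
Set Implicit Arguments. Unset Strict Implicit. Unset Printing Implicit Defensive.
Import Order.TTheory GRing.Theory Num.Theory.
Import numFieldNormedType.Exports.
Local Open Scope classical_set_scope.
Local Open Scope ring_scope.

Section Defs.
Variable R : realType.

Definition enorm (p : nat) (x : 'cV[R]_p) : R :=
  Num.sqrt (\sum_(i < p) (x i 0) ^+ 2).

Definition opnorm (m n : nat) (A : 'M[R]_(m, n)) : R :=
  sup [set enorm (A *m x) | x in [set x : 'cV[R]_n | enorm x <= 1]].

(* the (00)-block A^{(00)} = (A_ij)_{i,j in J}, realised as the p x p matrix
   padded with zeros outside J x J (same spectral norm) *)
Definition block00 (p : nat) (J : set 'I_p) (A : 'M[R]_p) : 'M[R]_p :=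
  \matrix_(i, j) (if `[< J i /\ J j >] then A i j else 0).

Definition diagm (p : nat) (d : 'I_p -> R) : 'M[R]_p := diag_mx (\row_j d j).

Definition partial (p : nat) (j : 'I_p) (f : 'cV[R]_p -> R^o) : 'cV[R]_p -> R^o :=
  fun x => 'D_(delta_mx j 0) f x.

Definition thrice_diff_on (p : nat) (B : set 'cV[R]_p) (f : 'cV[R]_p -> R^o) :=
  forall x, B x ->
    [/\ differentiable f x,
        forall i, differentiable (partial i f) x &
        forall i j, differentiable (partial j (partial i f)) x].

Definition d1norm (p : nat) (f : 'cV[R]_p -> R^o) (x : 'cV[R]_p) : R :=
  Num.sqrt (\sum_(i < p) (partial i f x) ^+ 2).
Definition d2norm (p : nat) (f : 'cV[R]_p -> R^o) (x : 'cV[R]_p) : R :=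
  Num.sqrt (\sum_(i < p) \sum_(j < p) (partial j (partial i f) x) ^+ 2).
Definition d3norm (p : nat) (f : 'cV[R]_p -> R^o) (x : 'cV[R]_p) : R :=
  Num.sqrt (\sum_(i < p) \sum_(j < p) \sum_(k < p)
              (partial k (partial j (partial i f)) x) ^+ 2).

Context (d : measure_display) (Omega : measurableType d) (P : probability Omega R).

Definition outer_lt (E : set Omega) (delta : R) : Prop :=
  exists A, [/\ measurable A, E `<=` A & (P A < delta%:E)%E].

Definition cvg0_in_prob (TT : set R) (X : R -> Omega -> \bar R) : Prop :=
  forall eps delta : R, 0 < eps -> 0 < delta ->
    exists T0 : R, forall T, TT T -> T0 <= T ->
      outer_lt [set w | (eps%:E < `|X T w|)%E] delta.

Definition bounded_in_prob (TT : set R) (X : R -> Omega -> \bar R) : Prop :=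
  forall delta : R, 0 < delta ->
    exists K T0 : R, forall T, TT T -> T0 <= T ->
      outer_lt [set w | (K%:E < `|X T w|)%E] delta.

End Defs.

(* Main.v *)
Require Import Defs.
From HB Require Import structures.
From mathcomp Require Import all_boot all_order all_algebra.
From mathcomp Require Import all_classical all_reals all_analysis.
Import Order.TTheory GRing.Theory Num.Theory.
Import numFieldNormedType.Exports.
Local Open Scope classical_set_scope.
Local Open Scope ring_scope.
From mathcomp Require Import ring lra.
Set Implicit Arguments. Unset Strict Implicit. Unset Printing Implicit Defensive.


Section S1.
Variable R : realType.
Variable p : nat.

Lemma open_box (Theta : set 'cV[R]_p) x : open Theta -> Theta x ->
  exists2 e : R, 0 < e & forall y : 'cV[R]_p, (forall i, `|y i 0 - x i 0| < e) -> Theta y.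
Proof.
move=> oT Tx.
have : nbhs x Theta by apply: open_nbhs_nbhs; split.
move=> /nbhs_ballP [e e0 eT]; exists e => // y hy; apply: eT.
split => // i j; rewrite (ord1 j) /ball /= distrC; exact: hy.
Qed.

Lemma line_derive (f : 'cV[R]_p -> R^o) x h t :
  differentiable f (x + t *: h) ->
  is_derive t (1:R) (fun s : R => f (x + s *: h)) ('d f (x + t *: h) h).
Proof.
move=> df.
have E : (fun s : R => s^-1 *: (((fun s : R => f (x + s *: h)) \o shift t) (s *: 1) - f (x + t *: h)))
  = (fun s : R => s^-1 *: ((f \o shift (x + t *: h)) (s *: h) - f (x + t *: h))).
  apply/funext => s /=; congr (_ *: (f _ - _)).
  by rewrite -[s%:A]/(s * 1) mulr1 scalerDl addrCA.
have dv : derivable (fun s : R => f (x + s *: h)) t 1.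
  rewrite /derivable E; exact: diff_derivable.
apply: DeriveDef => //.
rewrite /derive E -deriveE //.
Qed.
End S1.
Lemma aff_id (R : realType) (a b c t : R) : a + t*(b-a) - c = (1-t)*(a-c) + t*(b-c).
Proof. ring. Qed.
Section S2.
Variable R : realType.
Variable p : nat.
Lemma d_expand (f : 'cV[R]_p -> R^o) a (h : 'cV[R]_p) : differentiable f a ->
  'd f a h = \sum_i h i 0 * partial i f a.
Proof.
move=> df.
rewrite {1}[h]matrix_sum_delta linear_sum; apply: eq_bigr => i _.
rewrite big_ord1 linearZ /partial deriveE //.
Qed.

Lemma seg_mvt (f : 'cV[R]_p -> R^o) (y z : 'cV[R]_p) (rho K : R) :
 0 <= rho -> (forall i, `|y i 0 - z i 0| <= rho) ->
 (forall t : R, 0 <= t <= 1 -> differentiable f (z + t *: (y - z))) ->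
 (forall t : R, 0 <= t <= 1 -> \sum_i `|partial i f (z + t *: (y - z))| <= K) ->
 `|f y - f z| <= rho * K.
Proof.
move=> r0 hyz df hK.
set g := fun s : R => f (z + s *: (y - z)).
have dg (t : R) : 0 <= t <= 1 -> is_derive t 1 g ('d f (z + t *: (y - z)) (y - z)).
  by move=> /df; exact: line_derive.
have [c c01 E] : exists2 c, c \in `[0, 1]%R & g 1 - g 0 =
    'd f (z + c *: (y - z)) (y - z) * (1 - 0).
  apply: MVT_segment => //.
    move=> x; rewrite in_itv /= => /andP[x0 x1].
    by apply: dg; rewrite !ltW.
  apply: derivable_within_continuous => x; rewrite in_itv /= => x01.
  by have [] := dg x x01.
move: c01; rewrite in_itv /= => c01.
have -> : f y - f z = g 1 - g 0.
  by rewrite /g scale1r scale0r addr0 [z + _]addrC subrK.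
rewrite E subr0 mulr1 d_expand; last exact: df.
apply: (le_trans (ler_norm_sum _ _ _)).
apply: (@le_trans _ _ (\sum_i rho * `|partial i f (z + c *: (y - z))|)).
  apply: ler_sum => i _; rewrite normrM ler_wpM2r //.
  by rewrite !mxE.
rewrite -mulr_sumr ler_wpM2l //; exact: hK.
Qed.

Definition Box (x0 : 'cV[R]_p) (r : R) (y : 'cV[R]_p) := forall i, `|y i 0 - x0 i 0| <= r.

Lemma box_convex {x0 r y z} {t : R} : Box x0 r y -> Box x0 r z -> 0 <= t <= 1 ->
  Box x0 r (z + t *: (y - z)).
Proof.
move=> hy hz /andP[t0 t1] i; rewrite !mxE.
have -> : z i 0 + t * (y i 0 - z i 0) - x0 i 0 =
  (1 - t) * (z i 0 - x0 i 0) + t * (y i 0 - x0 i 0) by apply: aff_id.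
have t1' : 0 <= 1 - t by rewrite subr_ge0.
apply: (le_trans (ler_normD _ _)); rewrite !normrM (ger0_norm t0) (ger0_norm t1').
apply: (@le_trans _ _ ((1 - t) * r + t * r)); last by rewrite -mulrDl subrK mul1r.
by apply: lerD; apply: ler_wpM2l.
Qed.

Lemma sum_const_le (F : 'I_p -> R) c : (forall i, F i <= c) -> \sum_i F i <= p%:R * c.
Proof.
move=> h; apply: (@le_trans _ _ (\sum_(i < p) c)); first exact: ler_sum.
by rewrite sumr_const card_ord mulr_natl.
Qed.

Lemma grad_lip (f : 'cV[R]_p -> R^o) x0 (rho S1 S2 : R) y z (sigma : R) :
  0 <= rho -> 0 <= sigma ->
  (forall w, Box x0 rho w -> differentiable f w /\ forall i, differentiable (partial i f) w) ->
  (forall i, `|partial i f x0| <= S1) ->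
  (forall w i j, Box x0 rho w -> `|partial j (partial i f) w| <= S2) ->
  Box x0 rho y -> Box x0 rho z -> (forall i, `|y i 0 - z i 0| <= sigma) ->
  `|f y - f z| <= sigma * (p%:R * (S1 + rho * (p%:R * S2))).
Proof.
move=> r0 s0 hd h1 h2 by_ bz hyz.
have bx0 : Box x0 rho x0 by move=> i; rewrite subrr normr0.
apply: seg_mvt => //.
  by move=> t t01; have [] := hd _ (box_convex by_ bz t01).
move=> t t01; have bw := box_convex by_ bz t01.
apply: sum_const_le => i.
set w := z + t *: (y - z) in bw *.
have -> : partial i f w = (partial i f w - partial i f x0) + partial i f x0 by rewrite subrK.
apply: (le_trans (ler_normD _ _)); rewrite addrC lerD //.
apply: seg_mvt => //.
- by move=> t' t'01; have [_] := hd _ (box_convex bw bx0 t'01); apply.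
- move=> t' t'01; apply: sum_const_le => j; apply: h2.
  exact: box_convex bw bx0 t'01.
Qed.
End S2.
Section M.
Variable R : realType.
Variable p : nat.
Implicit Types x u : 'cV[R]_p.

Lemma sum_sq_ge0 x : 0 <= \sum_i (x i 0) ^+ 2.
Proof. by apply: sumr_ge0 => i _; exact: sqr_ge0. Qed.

Lemma sq_le (a m : R) : `|a| <= m -> a ^+ 2 <= m ^+ 2.
Proof.
move=> h; rewrite -(real_normK (num_real a)) !expr2; apply: ler_pM => //.
Qed.

Lemma sqrt_le (a b : R) : 0 <= b -> a <= b ^+ 2 -> Num.sqrt a <= b.
Proof. by move=> b0 h; rewrite -(ger0_norm b0) -sqrtr_sqr ler_sqrt // sqr_ge0. Qed.

Lemma coord_le_enorm x i : `|x i 0| <= enorm x.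
Proof.
rewrite /enorm -sqrtr_sqr ler_sqrt ?sum_sq_ge0 // (bigD1 i) //= lerDl.
by apply: sumr_ge0 => j _; exact: sqr_ge0.
Qed.

Lemma enorm_le_box x (c : R) : 0 <= c -> (forall i, `|x i 0| <= c) -> enorm x <= p%:R * c.
Proof.
move=> c0 h; apply: sqrt_le; first by rewrite mulr_ge0.
apply: (@le_trans _ _ (\sum_(i < p) c ^+ 2)); first by apply: ler_sum => i _; exact: sq_le.
rewrite sumr_const card_ord -[c ^+ 2 *+ p]mulr_natl exprMn; apply: ler_wpM2r; first exact: sqr_ge0.
rewrite expr2 -natrM ler_nat; case: p => // n; exact: leq_pmulr.
Qed.

Lemma enorm_gt0 x : x != 0 -> 0 < enorm x.
Proof.
move=> x0; rewrite /enorm sqrtr_gt0 lt_def sum_sq_ge0 andbT.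
apply: contra x0 => /eqP s0; apply/eqP/matrixP => i j; rewrite (ord1 j) mxE.
have H := psumr_eq0P (fun k _ => sqr_ge0 (x k 0)) s0.
have := H i isT.
by move/eqP; rewrite sqrf_eq0 => /eqP.
Qed.

Lemma enorm0 : enorm (0 : 'cV[R]_p) = 0.
Proof. by rewrite /enorm big1 ?sqrtr0 // => i _; rewrite mxE expr0n. Qed.

Lemma enorm_delta (c : R) i : enorm (c *: (delta_mx i 0 : 'cV[R]_p)) = `|c|.
Proof.
rewrite /enorm (bigD1 i) //= big1 ?addr0; first by rewrite !mxE !eqxx mulr1 sqrtr_sqr.
by move=> j /negPf ji; rewrite !mxE ji mulr0 expr0n.
Qed.

Lemma diagmE (d : 'I_p -> R) i j : diagm d i j = if i == j then d i else 0.
Proof. by rewrite /diagm !mxE; case: eqP. Qed.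

Lemma mul_diag_col (d : 'I_p -> R) u i : (diagm d *m u) i 0 = d i * u i 0.
Proof.
rewrite mxE (bigD1 i) //= big1 ?addr0; first by rewrite diagmE eqxx.
by move=> j /negPf ji; rewrite diagmE eq_sym ji mul0r.
Qed.

Lemma opnorm_ub (A : 'M[R]_p) (m : R) : 0 <= m ->
  (forall i j, i != j -> A i j = 0) -> (forall i, `|A i i| <= m) ->
  forall x, enorm x <= 1 -> enorm (A *m x) <= m.
Proof.
move=> m0 hA hm x hx.
have Ax i : (A *m x) i 0 = A i i * x i 0.
  rewrite mxE (bigD1 i) //= big1 ?addr0 // => j ji; rewrite hA ?mul0r //.
  by rewrite eq_sym.
have s1 : \sum_i (x i 0) ^+ 2 <= 1.
  rewrite -(sqr_sqrtr (sum_sq_ge0 x)) -(expr1n _ 2).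
  by apply: sq_le; rewrite ger0_norm ?sqrtr_ge0.
apply: sqrt_le => //.
apply: (@le_trans _ _ (\sum_i m ^+ 2 * (x i 0) ^+ 2)).
  apply: ler_sum => i _; rewrite Ax exprMn; apply: ler_wpM2r; first exact: sqr_ge0.
  exact: sq_le.
rewrite -mulr_sumr -[X in _ <= X]mulr1; apply: ler_wpM2l => //; exact: sqr_ge0.
Qed.

Lemma opnorm_le (A : 'M[R]_p) (m : R) : 0 <= m ->
  (forall i j, i != j -> A i j = 0) -> (forall i, `|A i i| <= m) ->
  opnorm A <= m.
Proof.
move=> m0 hA hm; apply: ge_sup.
  by exists (enorm (A *m 0)); exists 0 => //=; rewrite enorm0.
by move=> _ [x hx <-]; exact: opnorm_ub.
Qed.

Lemma opnorm_diag_ge (d : 'I_p -> R) i : `|d i| <= opnorm (diagm d).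
Proof.
have hA : forall i j, i != j -> diagm d i j = 0.
  by move=> k j /negPf kj; rewrite diagmE kj.
have hm : forall k, `|diagm d k k| <= \sum_j `|d j|.
  move=> k; rewrite diagmE eqxx (bigD1 k) //= lerDl.
  by apply: sumr_ge0 => j _.
apply: sup_upper_bound.
  split; first by exists (enorm (diagm d *m 0)); exists 0 => //=; rewrite enorm0.
  exists (\sum_j `|d j|) => _ [x hx <-].
  by apply: opnorm_ub => //; apply: sumr_ge0.
exists (delta_mx i 0).
  by rewrite /= -[delta_mx _ _]scale1r enorm_delta normr1.
have -> : diagm d *m delta_mx i 0 = d i *: (delta_mx i 0 : 'cV[R]_p).
  apply/matrixP => k j; rewrite (ord1 j) mul_diag_col !mxE.
  by case: eqP => [->|]; rewrite ?mulr1 ?mulr0.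
by rewrite enorm_delta.
Qed.

Lemma diag_coord_le (d : 'I_p -> R) u i :
  `|(diagm d *m u) i 0| <= opnorm (diagm d) * enorm u.
Proof.
rewrite mul_diag_col normrM; apply: ler_pM => //.
  exact: opnorm_diag_ge.
exact: coord_le_enorm.
Qed.
End M.
Section P.
Variable R : realType.
Context (d : measure_display) (Omega : measurableType d) (P : probability Omega R).

Lemma outer_mono (E F : set Omega) (dl : R) : E `<=` F -> outer_lt P F dl -> outer_lt P E dl.
Proof. by move=> EF [A [mA FA PA]]; exists A; split => //; apply: subset_trans FA. Qed.

Lemma outer_le (E : set Omega) (d1 d2 : R) : d1 <= d2 -> outer_lt P E d1 -> outer_lt P E d2.
Proof.
move=> d12 [A [mA EA PA]]; exists A; split => //.
by apply: (lt_le_trans PA); rewrite lee_fin.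
Qed.

Lemma outer_U (E1 E2 : set Omega) (d1 d2 : R) :
  outer_lt P E1 d1 -> outer_lt P E2 d2 -> outer_lt P (E1 `|` E2) (d1 + d2).
Proof.
move=> [A1 [m1 E1A P1]] [A2 [m2 E2A P2]]; exists (A1 `|` A2); split.
- exact: measurableU.
- by move=> w [/E1A|/E2A] h; [left|right].
- apply: (le_lt_trans (measureU2 P m1 m2)).
  by rewrite EFinD; apply: lteD.
Qed.

Lemma outer_null (N : set Omega) (dl : R) : measurable N -> P N = 0%E -> 0 < dl ->
  outer_lt P N dl.
Proof. by move=> mN PN d0; exists N; split => //; rewrite PN lte_fin. Qed.

Lemma ev_fin (I : eqType) (TT : set R) (E : R -> I -> set Omega) (dl : R) : 0 < dl ->
  (forall j, exists T0 : R, forall T, TT T -> T0 <= T -> outer_lt P (E T j) dl) ->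
  forall s : seq I, exists T0 : R, forall T, TT T -> T0 <= T ->
    outer_lt P [set w | exists2 j, j \in s & E T j w] ((size s).+1%:R * dl).
Proof.
move=> d0 hE; elim => [|j s [T0 IH]].
  exists 0 => T _ _; apply: (@outer_mono _ set0); first by move=> w [].
  by rewrite mul1r; apply: outer_null => //; rewrite measure0.
have [T1 h1] := hE j.
exists (Num.max T0 T1) => T hT; rewrite ge_max => /andP[hT0 hT1].
have -> : (size (j :: s)).+1%:R * dl = dl + (size s).+1%:R * dl.
  by rewrite /= [in LHS]mulrSr mulrDl mul1r addrC.
apply: (@outer_mono _ (E T j `|` [set w | exists2 j, j \in s & E T j w])).
  move=> w [k]; rewrite in_cons => /orP[/eqP-> h|ks h]; [left|right] => //.
  by exists k.
by apply: outer_U; [apply: h1|apply: IH].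
Qed.
End P.
Section G.
Variable R : realType.
Variable p : nat.

Lemma sqrt_sum_ge (F : 'I_p -> R) i : `|F i| <= Num.sqrt (\sum_i F i ^+ 2).
Proof.
have h0 : 0 <= \sum_i F i ^+ 2 by apply: sumr_ge0 => j _; exact: sqr_ge0.
rewrite -sqrtr_sqr ler_sqrt // (bigD1 i) //= lerDl.
by apply: sumr_ge0 => j _; exact: sqr_ge0.
Qed.

Lemma sqrt_sum2_ge (F : 'I_p -> 'I_p -> R) i j :
  `|F i j| <= Num.sqrt (\sum_i \sum_j F i j ^+ 2).
Proof.
have h0 : forall k, 0 <= \sum_j F k j ^+ 2 by move=> k; apply: sumr_ge0 => l _; exact: sqr_ge0.
rewrite -sqrtr_sqr ler_sqrt; last by apply: sumr_ge0.
rewrite (bigD1 i) //= (bigD1 j) //= -addrA lerDl.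
apply: addr_ge0; first by apply: sumr_ge0 => l _; exact: sqr_ge0.
by apply: sumr_ge0.
Qed.

Lemma mul_diagm n (dd : 'I_p -> R) (A : 'M[R]_(p, n)) i j : (diagm dd *m A) i j = dd i * A i j.
Proof.
rewrite mxE (bigD1 i) //= big1 ?addr0; first by rewrite diagmE eqxx.
by move=> k /negPf ki; rewrite diagmE eq_sym ki mul0r.
Qed.

Lemma G_entry (al t : 'I_p -> R) : (forall i, al i != 0) -> forall i j,
  (invmx (diagm al) *m diagm t) i j = if i == j then (al i)^-1 * t i else 0.
Proof.
move=> al0 i j.
have ua : diagm al \in unitmx.
  rewrite unitmxE unitfE /diagm det_diag; apply/prodf_neq0 => k _.
  by rewrite mxE.
have E : invmx (diagm al) = diagm (fun k => (al k)^-1).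
  have A1 : diagm al *m diagm (fun k => (al k)^-1) = 1%:M.
    apply/matrixP => k l; rewrite mul_diagm diagmE !mxE.
    by case: eqP => _; rewrite ?mulfV ?mulr0.
  by rewrite -[invmx _]mulmx1 -A1 mulmxA mulVmx // mul1mx.
rewrite E mul_diagm diagmE; case: eqP => _; by rewrite ?mulr0.
Qed.
End G.
Section C.
Variable R : realType.
Variable p : nat.

Lemma addE (a b : 'cV[R]_p) i : (a + b) i 0 = a i 0 + b i 0.
Proof. by rewrite mxE. Qed.
Lemma subE (a b : 'cV[R]_p) i : (a - b) i 0 = a i 0 - b i 0.
Proof. by rewrite !mxE. Qed.

Definition Cst (q M K1 K2 : R) :=
  (p%:R * (2 * M)) `^ (1 - q) * (p%:R * (`|K1| + M * (p%:R * `|K2|))).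

Lemma Cst_ge0 q M K1 K2 : 0 <= M -> 0 <= Cst q M K1 K2.
Proof.
move=> M0; rewrite /Cst mulr_ge0 ?powR_ge0 // mulr_ge0 // addr_ge0 // mulr_ge0 //.
Qed.

Lemma ratio_bound (q : R) (Theta : set 'cV[R]_p) (ts : 'cV[R]_p) (Rad e0 : R)
  (al : 'I_p -> R) (f : 'cV[R]_p -> R^o) (K1 K2 M : R) (u v : 'cV[R]_p) :
  0 < q <= 1 -> 0 < M -> 0 < opnorm (diagm al) ->
  (forall y : 'cV[R]_p, (forall i, `|y i 0 - ts i 0| < e0) -> Theta y) ->
  opnorm (diagm al) * M < e0 ->
  p%:R * (opnorm (diagm al) * M) < Rad ->
  thrice_diff_on [set th | Theta th /\ enorm (th - ts) < Rad] f ->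
  (forall i, `|partial i f ts| <= `|K1| / opnorm (diagm al)) ->
  (forall th i j, Theta th -> enorm (th - ts) < Rad ->
     `|partial j (partial i f) th| <= `|K2| / opnorm (diagm al) ^+ 2) ->
  enorm u < M -> enorm v < M -> u != v ->
  `|f (ts + diagm al *m u) - f (ts + diagm al *m v)| / enorm (u - v) `^ q
    <= Cst q M K1 K2.
Proof.
move=> /andP[q0 q1] M0 A0 hbox hAe hAR hdiff hK1 hK2 hu hv uv.
set A := opnorm (diagm al) in A0 hAe hAR hK1 hK2 *.
set rho := A * M.
have rho0 : 0 <= rho by rewrite mulr_ge0 // ltW.
have hB : forall w, Box ts rho w -> Theta w /\ enorm (w - ts) < Rad.
  move=> w hw; split.
    by apply: hbox => i; exact: le_lt_trans (hw i) hAe.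
  apply: le_lt_trans hAR; apply: enorm_le_box => // i.
  by rewrite subE; exact: hw.
have hby : forall x, enorm x < M -> Box ts rho (ts + diagm al *m x).
  move=> x hx i; rewrite addE addrC addKr.
  apply: (le_trans (diag_coord_le _ _ _)); apply: ler_wpM2l; first exact: ltW.
  exact: ltW.
set e := enorm (u - v).
have e0' : 0 < e by apply: enorm_gt0; rewrite subr_eq0.
set K' := p%:R * (`|K1| + M * (p%:R * `|K2|)).
have K'0 : 0 <= K' by rewrite mulr_ge0 // addr_ge0 // mulr_ge0 // ?ltW // mulr_ge0.
have hD : `|f (ts + diagm al *m u) - f (ts + diagm al *m v)| <= e * K'.
  have -> : e * K' = (A * e) * (p%:R * (`|K1| / A + rho * (p%:R * (`|K2| / A ^+ 2)))).
    rewrite /K' /rho; field; exact: lt0r_neq0.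
  apply: grad_lip.
  - exact: rho0.
  - by rewrite mulr_ge0 ?ltW.
  - move=> w /hB hw; have [] := hdiff w hw => d1 d2 _; split => //.
  - exact: hK1.
  - by move=> w i j /hB [] hw1 hw2; apply: hK2.
  - exact: hby.
  - exact: hby.
  - move=> i; rewrite !addE opprD addrACA subrr add0r !mul_diag_col -mulrBr normrM.
    apply: ler_pM => //; first exact: opnorm_diag_ge.
    by rewrite -subE; exact: coord_le_enorm.
have eq0 : 0 < e `^ q by apply: powR_gt0.
apply: (@le_trans _ _ (e * K' / e `^ q)).
  by apply: ler_wpM2r => //; rewrite invr_ge0 ltW.
rewrite mulrAC.
have -> : e / e `^ q = e `^ (1 - q).
  rewrite powRB; last by rewrite (gt_eqF e0') implybT.
  by rewrite powRr1 // ltW.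
rewrite /Cst; apply: ler_wpM2r => //.
apply: ge0_ler_powR.
- by rewrite subr_ge0.
- by rewrite nnegrE ltW.
- by rewrite nnegrE mulr_ge0 // mulr_ge0 // ltW.
apply: enorm_le_box; first by rewrite mulr_ge0 // ltW.
move=> i; rewrite subE; apply: (le_trans (ler_normB _ _)).
rewrite mulr2n mulrDl mul1r; apply: lerD.
  by apply: ltW; apply: le_lt_trans hu; exact: coord_le_enorm.
by apply: ltW; apply: le_lt_trans hv; exact: coord_le_enorm.
Qed.

Lemma opnorm_ge0 (A : 'M[R]_p) (m : R) : 0 <= m ->
  (forall i j, i != j -> A i j = 0) -> (forall i, `|A i i| <= m) ->
  0 <= opnorm A.
Proof.
move=> m0 hA hm.
have -> : (0:R) = enorm (A *m 0) by rewrite mulmx0 enorm0.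
apply: sup_upper_bound; last by exists 0 => //=; rewrite enorm0.
split; first by exists (enorm (A *m 0)); exists 0 => //=; rewrite enorm0.
by exists m => _ [x hx <-]; exact: opnorm_ub.
Qed.
End C.

Unset Implicit Arguments.

Theorem proposition2
  (R : realType) (p : nat)
  (Theta : set 'cV[R]_p) (theta_star : 'cV[R]_p)
  (d : measure_display) (Omega : measurableType d) (P : probability Omega R)
  (TT : set R)
  (H : R -> Omega -> 'cV[R]_p -> R^o)
  (xi : R -> Omega -> 'I_p -> R)
  (alpha : R -> 'I_p -> R)
  (q : R) :
  (* standing assumptions *)
  open Theta -> bounded_set Theta -> Theta theta_star ->
  TT `<=` [set t | 0 <= t] ->
  (forall x : R, exists2 t, TT t & x < t) ->
  (forall T w, TT T -> {within closure Theta, continuous (H T w)}) ->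
  (forall T th, TT T -> measurable_fun setT (fun w => H T w th)) ->
  (forall T w j, TT T -> 0 < xi T w j) ->
  (forall T j, TT T -> measurable_fun setT (fun w => xi T w j)) ->
  (forall T j, TT T -> alpha T j != 0) ->
  (forall eps : R, 0 < eps -> exists T0 : R, forall T, TT T -> T0 <= T ->
      opnorm (diagm (alpha T)) < eps) ->
  0 < q <= 1 ->
  (* [A6] *)
  (forall j : 'I_p, theta_star j 0 = 0 ->
     cvg0_in_prob P TT (fun T w =>
       ((xi T w j `^ (- q^-1)) * `|alpha T j|^-1)%:E)) ->
  (* [A7'] *)
  (exists Rad : R, 0 < Rad /\
     let B := [set th | Theta th /\ enorm (th - theta_star) < Rad] in
     [/\ (forall T, TT T -> exists N, [/\ measurable N, P N = 0%E &
            forall w, ~ N w -> thrice_diff_on B (H T w)]),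
         bounded_in_prob P TT (fun T w =>
            (opnorm (diagm (alpha T)) * d1norm (H T w) theta_star)%:E),
         bounded_in_prob P TT (fun T w =>
            ((opnorm (diagm (alpha T)) ^+ 2)%:E *
             ereal_sup [set (d2norm (H T w) th)%:E | th in B])%E) &
         bounded_in_prob P TT (fun T w =>
            ((opnorm (diagm (alpha T)) ^+ 2)%:E *
             ereal_sup [set (d3norm (H T w) th)%:E | th in B])%E)]) ->
  (* [A7] *)
  forall M : R, 0 < M ->
    cvg0_in_prob P TT (fun T w =>
      let a := diagm (alpha T) in
      let J0 := [set j : 'I_p | theta_star j 0 = 0] in
      let a_tilde := diagm (fun j => if `[< J0 j >] then xi T w j `^ (- q^-1)
                                     else alpha T j) in
      let G := invmx a *m a_tilde in
      let UT := [set u : 'cV[R]_p | closure Theta (theta_star + a *m u)] in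
      (ereal_sup ([set 0%E] `|`
         [set r | exists u v : 'cV[R]_p,
            [/\ UT u /\ UT v, (enorm u < M)%R /\ (enorm v < M)%R, u <> v &
             r = (`|H T w (theta_star + a *m u) - H T w (theta_star + a *m v)|
                   / (enorm (u - v)) `^ q)%:E]])
       * (opnorm (block00 J0 G) `^ q)%:E)%E).
Proof.
move=> oT _ Tstar _ _ _ _ xipos _ alpha0 aSmall /andP[q0 q1] A6 [Rad [Rad0 A7]] M M0.
move: A7 => /= [hN hb1 hb2 _].
move=> eps dl eps0 dl0.
have [e0 e0pos hbox] := open_box oT Tstar.
set ea := Num.min e0 (Rad / p.+1%:R) / M.
have ea0 : 0 < ea.
  by rewrite divr_gt0 // lt_min e0pos divr_gt0 // ltr0n.
have [Ta hTa] := aSmall ea ea0.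
have d4 : 0 < dl / 4 by rewrite divr_gt0.
have [K1 [T1 h1]] := hb1 _ d4.
have [K2 [T2 h2]] := hb2 _ d4.
set C := Cst p q M K1 K2.
have C0 : 0 <= C by apply: Cst_ge0; exact: ltW.
set eta := (eps / (C + 1)) `^ (q^-1).
have eta0 : 0 < eta by apply: powR_gt0; rewrite divr_gt0 // ltr_wpDl.
set E3 := fun T j => if `[< theta_star j 0 = 0 >] then
   [set w | (eta%:E < `|((xi T w j `^ (- q^-1)) * `|alpha T j|^-1)%:E|)%E] else set0.
set d3 := dl / 4 / p.+1%:R.
have d30 : 0 < d3 by rewrite divr_gt0 // ltr0n.
have hE3 : forall j, exists T0 : R, forall T, TT T -> T0 <= T -> outer_lt P (E3 T j) d3.
  move=> j; rewrite /E3; case: asboolP => hj.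
    have [T0 hT0] := A6 j hj eta d3 eta0 d30.
    by exists T0.
  by exists 0 => T _ _; apply: outer_null => //; rewrite measure0.
have [T3 h3] := ev_fin d30 hE3 (enum 'I_p).
exists (Num.max (Num.max Ta T1) (Num.max T2 T3)) => T hT.
rewrite !ge_max => /andP[/andP[hTa' hT1'] /andP[hT2' hT3']].
have [N [mN PN hNd]] := hN T hT.
set A := opnorm (diagm (alpha T)).
set E1 := [set w | (K1%:E < `|(A * d1norm (H T w) theta_star)%:E|)%E].
set E2 := [set w | (K2%:E < `|((A ^+ 2)%:E * ereal_sup [set (d2norm (H T w) th)%:E | th in [set th | Theta th /\ (enorm (th - theta_star) < Rad)%R]])|)%E].
set E3U := [set w | exists2 j, j \in enum 'I_p & E3 T j w].
apply: (outer_mono (F := N `|` E1 `|` E2 `|` E3U)); last first.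
  apply: (outer_le (d1 := dl/4 + dl/4 + dl/4 + (size (enum 'I_p)).+1%:R * d3)).
    rewrite size_enum_ord.
    have -> : p.+1%:R * d3 = dl / 4.
      rewrite /d3; field.
      apply/negP => /eqP h; have h0 : (0 : R) <= p%:R by exact: ler0n.
      lra.
    lra.
  apply: outer_U; [apply: outer_U; [apply: outer_U|]|].
  - by apply: outer_null.
  - exact: h1.
  - exact: h2.
  - exact: h3.
move=> w hw; apply: contrapT => hn.
have wN : ~ N w by move=> h; apply: hn; left; left; left.
have w1 : ~ E1 w by move=> h; apply: hn; left; left; right.
have w2 : ~ E2 w by move=> h; apply: hn; left; right.
have w3 : forall j, ~ E3 T j w by move=> j h; apply: hn; right; exists j => //; rewrite mem_enum.
move: hw => /=; rewrite ltNge => /negP; apply.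
have hd := hNd w wN.
set S := ereal_sup (_ |` _).
set g := opnorm (block00 _ _).
have hS0 : (0 <= S)%E by apply: ereal_sup_ubound; left.
have hSC : (S <= C%:E)%E.
  apply: ge_ereal_sup => r [-> | [u [v [[_ _] [hu hv] uv ->]]]]; first by rewrite lee_fin.
  rewrite lee_fin.
  have pgt0 : (0 < p)%N.
    rewrite lt0n; apply/negP => /eqP p0; apply: uv; apply/matrixP => i j; exfalso.
    by have := ltn_ord i; move: (nat_of_ord i) => k; rewrite p0.
  have A0 : 0 < A.
    have hh := @opnorm_diag_ge R p (alpha T) (Ordinal pgt0).
    have h0 : 0 < `|alpha T (Ordinal pgt0)| by rewrite normr_gt0; exact: alpha0.
    exact: lt_le_trans h0 hh.
  have hAm : A * M < Num.min e0 (Rad / p.+1%:R).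
    have := hTa T hT hTa'; rewrite -/A /ea => h.
    by rewrite -[Num.min _ _](divfK (lt0r_neq0 M0)) ltr_pM2r.
  apply: (ratio_bound (Theta:=Theta) (Rad:=Rad) (e0:=e0)).
  - by rewrite q0 q1.
  - exact: M0.
  - exact: A0.
  - exact: hbox.
  - have hmin : Num.min e0 (Rad / p.+1%:R) <= e0 by rewrite ge_min lexx.
    exact: (lt_le_trans hAm hmin).
  - have hmin : Num.min e0 (Rad / p.+1%:R) <= Rad / p.+1%:R by rewrite ge_min lexx orbT.
    have h := lt_le_trans hAm hmin.
    rewrite ltr_pdivlMr ?ltr0n // in h.
    apply: le_lt_trans h; rewrite mulrC; apply: ler_wpM2l; first by rewrite mulr_ge0 // ltW.
    by rewrite ler_nat.
  - exact: hd.
  - move=> i.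
    have hw1 : (`|(A * d1norm (H T w) theta_star)%:E| <= K1%:E)%E.
      by rewrite leNgt; apply/negP.
    rewrite abse_EFin lee_fin ger0_norm in hw1; last by apply: mulr_ge0; [exact: ltW | exact: sqrtr_ge0].
    rewrite ler_pdivlMr //.
    apply: (le_trans (ler_wpM2r (ltW A0) (sqrt_sum_ge (fun i => partial i (H T w) theta_star) i))).
    by rewrite mulrC; apply: (le_trans hw1); exact: ler_norm.
  - move=> th i j hth hthR.
    have hw2 : (`|(A ^+ 2)%:E * ereal_sup [set (d2norm (H T w) th)%:E | th in [set th | Theta th /\ (enorm (th - theta_star) < Rad)%R]]| <= K2%:E)%E.
      by rewrite leNgt; apply/negP.
    have h2' : A ^+ 2 * d2norm (H T w) th <= K2.
      rewrite -lee_fin EFinM; apply: (le_trans _ (le_trans (lee_abs _) hw2)).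
      apply: lee_wpmul2l; first by rewrite lee_fin sqr_ge0.
      by apply: ereal_sup_ubound; exists th.
    have A20 : 0 < A ^+ 2 by rewrite exprn_gt0.
    rewrite ler_pdivlMr //.
    apply: (le_trans (ler_wpM2r (ltW A20) (sqrt_sum2_ge (fun i j => partial j (partial i (H T w)) th) i j))).
    by rewrite mulrC; apply: (le_trans h2'); exact: ler_norm.
  - exact: hu.
  - exact: hv.
  - by apply/eqP.
have al0 : forall i, alpha T i != 0 by move=> i; apply: alpha0.
have hoff : forall i j, i != j -> block00 [set j | theta_star j 0 = 0]
    (invmx (diagm (alpha T)) *m diagm (fun j : 'I_p => if `[< theta_star j 0 = 0 >]
      then xi T w j `^ (- q^-1) else alpha T j)) i j = 0.
  move=> i j ij; rewrite /block00 mxE; case: asboolP => _ //.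
  by rewrite G_entry // (negPf ij).
have hdg : forall i, `|block00 [set j | theta_star j 0 = 0]
    (invmx (diagm (alpha T)) *m diagm (fun j : 'I_p => if `[< theta_star j 0 = 0 >]
      then xi T w j `^ (- q^-1) else alpha T j)) i i| <= eta.
  move=> i; rewrite /block00 mxE; case: asboolP => [[hi _]|_]; last by rewrite normr0 ltW.
  rewrite G_entry // eqxx asboolT //.
  have := w3 i; rewrite /E3 asboolT //= => h.
  have h' : (`|((xi T w i `^ (- q^-1)) * `|alpha T i|^-1)%:E| <= eta%:E)%E.
    by rewrite leNgt; apply/negP.
  move: h'; rewrite abse_EFin lee_fin !normrM !normfV normr_id mulrC.
  done.
have hg0 : 0 <= g by apply: (opnorm_ge0 (ltW eta0) hoff hdg).
have hg : g <= eta by apply: (opnorm_le (ltW eta0) hoff hdg).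
have hgq : g `^ q <= eps / (C + 1).
  have eC : 0 <= eps / (C + 1) by rewrite divr_ge0 ?ltW // ltr_wpDl.
  have -> : eps / (C + 1) = eta `^ q.
    by rewrite /eta -powRrM mulVf ?gt_eqF // powRr1.
  apply: ge0_ler_powR; [exact: ltW | by rewrite nnegrE | by rewrite nnegrE ltW | exact: hg].
move: hS0 hSC; case: S => [s| |] //= hs0 hsC.
rewrite lee_fin in hs0 hsC.
rewrite lee_fin ger0_norm; last by apply: mulr_ge0 => //; exact: powR_ge0.
apply: (le_trans (ler_pM hs0 (powR_ge0 _ _) hsC hgq)).
have C1 : 0 < C + 1 by rewrite ltr_wpDl.
rewrite mulrA ler_pdivrMr //; nra.
Qed.
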